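(* Let $R=k\langle x_1,\dots,x_n\rangle/(S)$ be a quadratic monomial algebra, $S$ a set of monomials $x_ix_j$, and suppose $R$ is initially Koszul with Groebner flag $(x_1,\dots,x_n)$. Let $R^!=k\langle x_1^*,\dots,x_n^*\rangle/(\{x_i^*x_j^* : x_ix_j\notin S\})$ be its quadratic dual algebra. Then $R^!$ is initially Koszul with Groebner flag $(x_n^*,\dots,x_1^* )$.
   Context: For a standard algebra $A$ (graded, $A_0=k$, generated by $A_1$) and a basis $y_1,\dots,y_n$ of $A_1$, let $I_k=y_1A+\dots+y_kA$ ($I_0=0$). $A$ is initially Koszul with Groebner flag $(y_1,\dots,y_n)$ if for each $1\le k\le n$ the right ideal $\{a\in A: y_ka\in I_{k-1}\}$ equals $I_j$ for some $j$ (equivalently $\{I_0,\dots,I_n\}$ is a Koszul filtration). *)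

(* Defs.v *)
From HB Require Import structures.
From mathcomp Require Import all_boot all_order all_algebra.
Set Implicit Arguments. Unset Strict Implicit. Unset Printing Implicit Defensive.
Import GRing.Theory.
Local Open Scope ring_scope.

(* Free associative algebra K<x_0,...,x_{n-1}>: an element is represented by
   a formal finite sum of terms (c, w) = c * x_{w_1} ... x_{w_m};
   two representations denote the same element iff they have the same
   coefficient function on words. *)
Section FreeAlg.
Variables (K : fieldType) (n : nat).

Definition word := seq 'I_n.
Definition fsum := seq (K * word).

Definition coef (p : fsum) (w : word) : K :=
  \sum_(t <- p | t.2 == w) t.1.

Definition fopp (p : fsum) : fsum := [seq (- t.1, t.2) | t <- p].
Definition fsub (p q : fsum) : fsum := p ++ fopp q.

Definition lmulx (i : 'I_n) (p : fsum) : fsum := [seq (t.1, i :: t.2) | t <- p].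

(* Membership in the two-sided ideal (S) generated by the quadratic monomials
   x_i x_j with S i j: p is a K-linear combination of u x_i x_j v. *)
Definition in_mono_ideal (S : rel 'I_n) (p : fsum) : Prop :=
  exists l : seq (K * word * 'I_n * 'I_n * word),
    all (fun t => S t.1.1.2 t.1.2) l /\
    coef p =1 coef [seq (t.1.1.1.1, t.1.1.1.2 ++ [:: t.1.1.2; t.1.2] ++ t.2) | t <- l].

Definition eqA (S : rel 'I_n) (p q : fsum) : Prop := in_mono_ideal S (fsub p q).

(* Given the flag y_1,...,y_n with y_{m+1} = x_{f m} (m : 'I_n, 0-based),
   I_k = y_1 A + ... + y_k A (as a subset of A, via representatives). *)
Definition in_flag_ideal (S : rel 'I_n) (f : 'I_n -> 'I_n) (k : nat) (a : fsum) : Prop :=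
  exists b : 'I_n -> fsum,
    eqA S a (flatten [seq lmulx (f m) (b m) | m : 'I_n <- enum 'I_n & (nat_of_ord m < k)%N]).

(* A = K<x>/(S) is initially Koszul with Groebner flag (y_1,...,y_n),
   y_{m+1} = x_{f m}: for each 1 <= k <= n (0-based m = k-1), the right ideal
   {a in A : y_k a in I_{k-1}} equals I_j for some 0 <= j <= n. *)
Definition initially_Koszul (S : rel 'I_n) (f : 'I_n -> 'I_n) : Prop :=
  forall m : 'I_n, exists j : nat, (j <= n)%N /\
    forall a : fsum, in_flag_ideal S f m (lmulx (f m) a) <-> in_flag_ideal S f j a.

(* quadratic dual of a quadratic monomial algebra: relations x_i^* x_j^*
   for x_i x_j not in S (generator x_i^* is again indexed by i) *)
Definition dual_rel (S : rel 'I_n) : rel 'I_n := fun i j => ~~ S i j.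

End FreeAlg.

(* Main.v *)
Require Import Defs.
From mathcomp Require Import all_boot all_order all_algebra.
From mathcomp Require Import zify.
Set Implicit Arguments. Unset Strict Implicit. Unset Printing Implicit Defensive.
Import GRing.Theory.
Local Open Scope ring_scope.

Section Aux.
Variables (K : fieldType) (n : nat).
Implicit Types (S : rel 'I_n) (p q : fsum K n) (w : word n).

Fixpoint pat S w : bool :=
  match w with
  | a :: ((b :: _) as r) => S a b || pat S r
  | _ => false
  end.

Lemma pat_mid S u i j v : S i j -> pat S (u ++ [:: i, j & v]).
Proof.
move=> Sij; elim: u => [|a u IH] /=; first by rewrite Sij.
by case: u IH => [|b u] /= ->; rewrite orbT.
Qed.

Fixpoint decomp S w : option (word n * 'I_n * 'I_n * word n) :=
  match w with
  | a :: ((b :: r) as r') =>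
      if S a b then Some ([::], a, b, r)
      else omap (fun x => (a :: x.1.1.1, x.1.1.2, x.1.2, x.2)) (decomp S r')
  | _ => None
  end.

Lemma decompP S w x : decomp S w = Some x ->
  w = x.1.1.1 ++ [:: x.1.1.2, x.1.2 & x.2] /\ S x.1.1.2 x.1.2.
Proof.
elim: w x => [|a w IH] x //=; case: w IH => [|b r] IH //.
case: ifP => Sab; first by case=> <-.
case E: (decomp S (b :: r)) => [y|] //= [<-] /=.
by case: (IH y E) => -> ->.
Qed.

Lemma decomp_pat S w : pat S w -> decomp S w <> None.
Proof.
elim: w => [|a w IH] //=; case: w IH => [|b r] IH //.
case: ifP => Sab H; first by congruence.
move: (IH H).
by case: (decomp S (b :: r)).
Qed.

Lemma coef_cat p q w : coef (p ++ q) w = coef p w + coef q w.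
Proof. by rewrite /coef big_cat. Qed.

Lemma coef_fopp p w : coef (fopp p) w = - coef p w.
Proof. by rewrite /coef /fopp big_map sumrN. Qed.

Lemma coef_fsub p q w : coef (fsub p q) w = coef p w - coef q w.
Proof. by rewrite /fsub coef_cat coef_fopp. Qed.

Lemma coef_flatten (ls : seq (fsum K n)) w :
  coef (flatten ls) w = \sum_(p <- ls) coef p w.
Proof.
elim: ls => [|p ls IH] /=; first by rewrite big_nil /coef big_nil.
by rewrite big_cons coef_cat IH.
Qed.

Lemma coef_lmulx i p w : coef (lmulx i p) w =
  if w is l :: r then (if l == i then coef p r else 0) else 0.
Proof.
rewrite /coef /lmulx big_map; case: w => [|l r].
  by rewrite big1.
rewrite /=; under eq_bigl => t do rewrite eqseq_cons.
case: (eqVneq l i) => [_|ne] /=; first by [].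
by rewrite big1.
Qed.

Definition deriv i p : fsum K n :=
  [seq (t.1, behead t.2) | t <- p & ohead t.2 == Some i].

Lemma coef_deriv i p r : coef (deriv i p) r = coef p (i :: r).
Proof.
rewrite /coef /deriv big_map big_filter_cond /=.
apply: eq_bigl => t; case: t.2 => [|a s] //=.
Qed.

Lemma mono_ideal_iff S p :
  in_mono_ideal S p <-> forall w, ~~ pat S w -> coef p w = 0.
Proof.
split.
  case=> l [hS hc] w hw; rewrite hc /coef big_map big1_seq // => t /andP [/eqP E tl].
  move: hw; rewrite -E pat_mid //.
  by move/allP: hS => /(_ t tl).
move=> H.
pose mk (t : K * word n) := omap (fun x => (t.1, x.1.1.1, x.1.1.2, x.1.2, x.2)) (decomp S t.2).
exists (pmap mk p); split.
  apply/allP => t; rewrite mem_pmap => /mapP [s _]; rewrite /mk.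
  case E: (decomp S s.2) => [x|] //= [->] /=.
  by case: (decompP E).
have Hm : [seq (t.1.1.1.1, t.1.1.1.2 ++ [:: t.1.1.2; t.1.2] ++ t.2) | t <- pmap mk p]
    = [seq t <- p | pat S t.2].
  elim: p {H} => [|t p IH] //=; rewrite /mk /=.
  case E: (decomp S t.2) => [x|] /=.
    case: (decompP E) => Et Sx.
    have -> : pat S t.2 by rewrite Et pat_mid.
    by rewrite -Et -surjective_pairing -IH.
  case: ifP => // hp; by have := decomp_pat hp; rewrite E.
rewrite Hm => w; case hw: (pat S w); last by rewrite H ?hw // /coef big_filter_cond big1 // => t /andP [pt /eqP E]; move: hw; rewrite -E pt.
rewrite /coef big_filter_cond; apply: eq_bigl => t.
by case: (eqVneq t.2 w) => [->|]; rewrite ?hw ?andbF.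
Qed.

Definition startsP (f : 'I_n -> 'I_n) (k : nat) w : bool :=
  if w is l :: _ then [exists m : 'I_n, (m < k)%N && (f m == l)] else false.

Lemma flag_iff S f k (a : fsum K n) : injective f ->
  in_flag_ideal S f k a <-> forall w, ~~ pat S w -> ~~ startsP f k w -> coef a w = 0.
Proof.
move=> finj.
pose F (b : 'I_n -> fsum K n) :=
  flatten [seq lmulx (f m) (b m) | m : 'I_n <- enum 'I_n & (nat_of_ord m < k)%N].
have cF b w : coef (F b) w = \sum_(m <- enum 'I_n) (if (m < k)%N then coef (lmulx (f m) (b m)) w else 0).
  by rewrite coef_flatten big_map big_filter big_mkcond.
have cF0 b w : ~~ startsP f k w -> coef (F b) w = 0.
  move=> hs; rewrite cF big1 // => m _; case: ifP => // mk.
  rewrite coef_lmulx; case: w hs => [|l r] //= hs.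
  case: eqP => // El; case/negP: hs; apply/existsP; exists m; by rewrite mk El eqxx.
split.
  case=> b /mono_ideal_iff H w hw hs.
  by move: (H w hw); rewrite coef_fsub -/(F b) cF0 // subr0.
move=> H; exists (fun m => deriv (f m) a); apply/mono_ideal_iff => w hw.
rewrite coef_fsub -/(F _).
case hs: (startsP f k w); last by rewrite cF0 ?hs // H ?hs // subr0.
case: w hw hs => [|l r] //= hw /existsP [m0 /andP [m0k /eqP Em0]].
rewrite cF (bigD1_seq m0) ?mem_enum ?enum_uniq //= m0k coef_lmulx Em0 eqxx coef_deriv.
rewrite big1 ?addr0 ?subrr // => m mm0; case: ifP => // _.
rewrite coef_lmulx -Em0; case: eqP => // /finj E; by move: mm0; rewrite E eqxx.
Qed.

Lemma step_iff S f (m : 'I_n) (a : fsum K n) : injective f ->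
  in_flag_ideal S f m (lmulx (f m) a) <-> forall r, ~~ pat S (f m :: r) -> coef a r = 0.
Proof.
move=> finj; rewrite flag_iff //; split.
  move=> H r hr; have := H (f m :: r).
  rewrite coef_lmulx eqxx; apply => //.
  apply/negP => /existsP [m' /andP [m'm /eqP /finj E]]; by move: m'm; rewrite E ltnn.
move=> H [|l r] hw hs; rewrite coef_lmulx //.
case: eqP => // El; apply: H; rewrite -El //.
Qed.

End Aux.

Theorem mainTheorem9 (K : fieldType) (n : nat) (S : rel 'I_n) :
  initially_Koszul K S id ->
  initially_Koszul K (dual_rel S) (@rev_ord n).
Proof.
move=> H.
have rows : forall i : 'I_n, exists j, (j <= n)%N /\ forall l : 'I_n, S i l = (l < j)%N.
  move=> i; case: (H i) => j [jn Hj]; exists j; split => // l.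
  have := Hj [:: (1 : K, [:: l])]; rewrite step_iff // flag_iff //.
  have ca r : coef [:: (1 : K, [:: l])] r = if [:: l] == r then 1 else 0.
    by rewrite /coef big_cons big_nil addr0.
  move=> [h1 h2]; apply/idP/idP.
  - move=> Sil; have : forall r, ~~ pat S (id i :: r) -> coef [:: (1 : K, [:: l])] r = 0.
      move=> r; rewrite ca; case: eqP => // <- /=; by rewrite Sil.
    move/h1/(_ [:: l] isT); rewrite ca eqxx /=.
    case: ([exists m : 'I_n, _]) /existsP => [[m /andP [mj /eqP <-]] _ //|_].
    by move/(_ isT)/eqP; rewrite oner_eq0.
  - move=> lj; apply/negPn/negP => nS.
    have : forall w, ~~ pat S w -> ~~ startsP id j w -> coef [:: (1 : K, [:: l])] w = 0.
      move=> w _; rewrite ca; case: eqP => // <- /=.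
      move=> /negP []; apply/existsP; exists l; by rewrite lj eqxx.
    move/h2/(_ [:: l]); rewrite /= orbF ca eqxx => /(_ nS)/eqP; by rewrite oner_eq0.
move=> m; case: (rows (rev_ord m)) => j [jn Hj]; exists (n - j)%N; split; first lia.
move=> a; rewrite step_iff; last exact: rev_ord_inj.
rewrite flag_iff; last exact: rev_ord_inj.
have key : forall w, ~~ pat (dual_rel S) (rev_ord m :: w) =
    ~~ pat (dual_rel S) w && ~~ startsP (@rev_ord n) (n - j) w.
  move=> [|l r] //=; rewrite /dual_rel Hj.
  have -> : [exists m' : 'I_n, (m' < n - j)%N && (rev_ord m' == l)] = (j <= l)%N.
    apply/existsP/idP => [[m' /andP [m'j /eqP <-]]|jl] /=.
      by move: (ltn_ord m'); lia.
    exists (rev_ord l); rewrite rev_ordK eqxx andbT /=; by move: (ltn_ord l); lia.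
  by rewrite negb_or negbK -ltnNge andbC.
split=> Hx w; first by move=> h1 h2; apply: Hx; rewrite key h1.
by rewrite key => /andP [h1 h2]; apply: Hx.
Qed.
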